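(* Let $(A,B,\alpha)$ be a topological crossed module. Let $L=\{[\gamma]\in\pi A:\gamma(0)=0\}$, $M=\{[\beta]\in\pi B:\beta(0)=0\}$, $N=A$, $P=B$, with $\lambda[\gamma]=[\alpha\circ\gamma]$, $\lambda'[\gamma]=\gamma(1)$, $\mu[\beta]=\beta(1)$, $\nu=\alpha$. Let $P=B$ act on $N=A$ by the given action, on $L$ by $b\cdot[\gamma]=[r\mapsto b\cdot\gamma(r)]$, and on $M$ by $b\cdot[\beta]=[r\mapsto b+\beta(r)-b]$, and define $h:M\times N\to L$ by $h([\beta],a)=[r\mapsto\beta(r)\cdot a-a]$. Then $(L,M,N,P)$ with these data is a crossed square.
   Context: Groups are written additively. A crossed module $(A,B,\alpha)$: groups $A,B$, a left action of $B$ on $A$ by automorphisms, a homomorphism $\alpha:A\to B$ with $\alpha(b\cdot a)=b+\alpha(a)-b$ and $\alpha(a)\cdot a'=a+a'-a$. A topological crossed module is a crossed module in which $A,B$ are topological groups and $\alpha$ and the action are continuous. For a topological group $X$, $\pi X$ is the set of homotopy classes rel endpoints of paths $[0,1]\to X$, a group under pointwise addition. A crossed square: homomorphisms $\lambda:L\to M$, $\lambda':L\to N$, $\mu:M\to P$, $\nu:N\to P$ with $\nu\lambda'=\mu\lambda$, left actions of $P$ on $L,M,N$ (inducing actions of $M$ on $L,N$ via $\mu$ and of $N$ on $L,M$ via $\nu$, e.g. $m\cdot n=\mu(m)\cdot n$), and a function $h:M\times N\to L$, such that (i) $\lambda,\lambda'$ are $P$-equivariant and $\mu$, $\nu$, $\mu\lambda$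 are crossed modules; (ii) $\lambda h(m,n)=m+n\cdot(-m)$, $\lambda'h(m,n)=m\cdot n-n$; (iii) $h(\lambda(l),n)=l+n\cdot(-l)$, $h(m,\lambda'(l))=m\cdot l-l$; (iv) $h(m+m',n)=m\cdot h(m',n)+h(m,n)$, $h(m,n+n')=h(m,n)+n\cdot h(m,n')$; (v) $h(p\cdot m,p\cdot n)=p\cdot h(m,n)$, for all $l\in L$, $m,m'\in M$, $n,n'\in N$, $p\in P$. *)

(* Defs.v *)
From Stdlib Require Import Reals Lra ClassicalEpsilon.
Open Scope R_scope.

Definition is_topology {X : Type} (O : (X -> Prop) -> Prop) : Prop :=
  O (fun _ => True) /\
  (forall F : (X -> Prop) -> Prop, (forall U, F U -> O U) ->
      O (fun x => exists U, F U /\ U x)) /\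
  (forall U V, O U -> O V -> O (fun x => U x /\ V x)).

Definition continuous {X Y : Type} (OX : (X -> Prop) -> Prop)
  (OY : (Y -> Prop) -> Prop) (f : X -> Y) : Prop :=
  forall V, OY V -> OX (fun x => V (f x)).

Definition open_prod {X Y : Type} (OX : (X -> Prop) -> Prop)
  (OY : (Y -> Prop) -> Prop) (W : X * Y -> Prop) : Prop :=
  forall p, W p -> exists U V, OX U /\ OY V /\ U (fst p) /\ V (snd p) /\
    (forall q, U (fst q) -> V (snd q) -> W q).

Definition open_R (W : R -> Prop) : Prop :=
  forall x, W x -> exists eps, 0 < eps /\ forall y, Rabs (y - x) < eps -> W y.

Definition I := { r : R | 0 <= r <= 1 }.
Lemma I0_prf : 0 <= 0 <= 1. Proof. lra. Qed.
Lemma I1_prf : 0 <= 1 <= 1. Proof. lra. Qed.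
Definition I0 : I := exist _ 0 I0_prf.
Definition I1 : I := exist _ 1 I1_prf.
Definition open_I (U : I -> Prop) : Prop :=
  exists W, open_R W /\ forall r : I, U r <-> W (proj1_sig r).

Lemma const_continuous {X : Type} (OX : (X -> Prop) -> Prop) (c : X) :
  continuous open_I OX (fun _ => c).
Proof.
  intros V _. exists (fun _ => V c). split.
  - intros x Hx. exists 1. split; [lra| intros; exact Hx].
  - intros r; tauto.
Qed.

(* paths homotopic rel endpoints; first coordinate = path parameter,
   second coordinate = homotopy parameter *)
Definition homotopic {X : Type} (OX : (X -> Prop) -> Prop) (g d : I -> X) : Prop :=
  exists H : I * I -> X, continuous (open_prod open_I open_I) OX H /\
    (forall s, H (s, I0) = g s) /\ (forall s, H (s, I1) = d s) /\
    (forall t, H (I0, t) = g I0) /\ (forall t, H (I1, t) = g I1).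

(* ---------- Groups (written additively, not necessarily abelian) ---------- *)
Record GroupData := { gcar :> Type; gadd : gcar -> gcar -> gcar;
                      gopp : gcar -> gcar; gzero : gcar }.
Arguments gadd {g}. Arguments gopp {g}. Arguments gzero {g}.

Definition is_group (G : GroupData) : Prop :=
  (forall x y z : G, gadd x (gadd y z) = gadd (gadd x y) z) /\
  (forall x : G, gadd gzero x = x /\ gadd x gzero = x) /\
  (forall x : G, gadd (gopp x) x = gzero /\ gadd x (gopp x) = gzero).

Definition is_hom {G H : GroupData} (f : G -> H) : Prop :=
  forall x y, f (gadd x y) = gadd (f x) (f y).

Definition crossed_module (A B : GroupData) (act : B -> A -> A) (alpha : A -> B) : Prop :=
  is_group A /\ is_group B /\
  (forall a, act gzero a = a) /\
  (forall b b' a, act (gadd b b') a = act b (act b' a)) /\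
  (forall b a a', act b (gadd a a') = gadd (act b a) (act b a')) /\
  is_hom alpha /\
  (forall b a, alpha (act b a) = gadd (gadd b (alpha a)) (gopp b)) /\
  (forall a a', act (alpha a) a' = gadd (gadd a a') (gopp a)).

Definition topological_crossed_module (A B : GroupData)
  (OA : (A -> Prop) -> Prop) (OB : (B -> Prop) -> Prop)
  (act : B -> A -> A) (alpha : A -> B) : Prop :=
  crossed_module A B act alpha /\ is_topology OA /\ is_topology OB /\
  continuous (open_prod OA OA) OA (fun p => gadd (fst p) (snd p)) /\
  continuous OA OA (@gopp A) /\
  continuous (open_prod OB OB) OB (fun p => gadd (fst p) (snd p)) /\
  continuous OB OB (@gopp B) /\
  continuous OA OB alpha /\
  continuous (open_prod OB OA) OA (fun p => act (fst p) (snd p)).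

Definition crossed_square (L M N P : GroupData)
  (lam : L -> M) (lam' : L -> N) (mu : M -> P) (nu : N -> P)
  (aL : P -> L -> L) (aM : P -> M -> M) (aN : P -> N -> N)
  (h : M -> N -> L) : Prop :=
  let mN := fun (m : M) (n : N) => aN (mu m) n in
  let mL := fun (m : M) (l : L) => aL (mu m) l in
  let nL := fun (n : N) (l : L) => aL (nu n) l in
  let nM := fun (n : N) (m : M) => aM (nu n) m in
  is_hom lam /\ is_hom lam' /\
  (forall l, nu (lam' l) = mu (lam l)) /\
  (forall p l, lam (aL p l) = aM p (lam l)) /\
  (forall p l, lam' (aL p l) = aN p (lam' l)) /\
  crossed_module M P aM mu /\ crossed_module N P aN nu /\
  crossed_module L P aL (fun l => mu (lam l)) /\
  (forall m n, lam (h m n) = gadd m (nM n (gopp m))) /\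
  (forall m n, lam' (h m n) = gadd (mN m n) (gopp n)) /\
  (forall l n, h (lam l) n = gadd l (nL n (gopp l))) /\
  (forall m l, h m (lam' l) = gadd (mL m l) (gopp l)) /\
  (forall m m' n, h (gadd m m') n = gadd (mL m (h m' n)) (h m n)) /\
  (forall m n n', h m (gadd n n') = gadd (h m n) (nL n (h m n'))) /\
  (forall p m n, h (aM p m) (aN p n) = aL p (h m n)).

Definition path0 {X : Type} (OX : (X -> Prop) -> Prop) (z : X) (g : I -> X) : Prop :=
  continuous open_I OX g /\ g I0 = z.

(* the set {[g] in pi X : g(0) = z}, as the type of homotopy classes *)
Definition Pi0 {X : Type} (OX : (X -> Prop) -> Prop) (z : X) : Type :=
  { C : (I -> X) -> Prop | exists g, path0 OX z g /\ C = homotopic OX g }.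

Definition Pi0_zero {X : Type} (OX : (X -> Prop) -> Prop) (z : X) : Pi0 OX z :=
  exist _ (homotopic OX (fun _ => z))
    (ex_intro _ (fun _ => z) (conj (conj (const_continuous OX z) eq_refl) eq_refl)).

Definition rep {X : Type} {OX : (X -> Prop) -> Prop} {z : X} (x : Pi0 OX z) : I -> X :=
  proj1_sig (constructive_indefinite_description _ (proj2_sig x)).

(* the class [g] of a path g (default value zero if g is not a path from z,
   a case that never occurs in the constructions below) *)
Definition cls {X : Type} (OX : (X -> Prop) -> Prop) (z : X) (g : I -> X) : Pi0 OX z :=
  match excluded_middle_informative (path0 OX z g) with
  | left Hg => exist _ (homotopic OX g) (ex_intro _ g (conj Hg eq_refl))
  | right _ => Pi0_zero OX z
  end.

Definition Pi0Group {X : GroupData} (OX : (X -> Prop) -> Prop) : GroupData :=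
  {| gcar := Pi0 OX gzero;
     gadd := fun x y => cls OX gzero (fun r => gadd (rep x r) (rep y r));
     gopp := fun x => cls OX gzero (fun r => gopp (rep x r));
     gzero := Pi0_zero OX gzero |}.

Section Data.
Variables (A B : GroupData) (OA : (A -> Prop) -> Prop) (OB : (B -> Prop) -> Prop)
  (act : B -> A -> A) (alpha : A -> B).

Definition sqL : GroupData := Pi0Group OA.
Definition sqM : GroupData := Pi0Group OB.
Definition sq_lam (x : sqL) : sqM := cls OB gzero (fun r => alpha (rep x r)).
Definition sq_lam' (x : sqL) : A := rep x I1.
Definition sq_mu (y : sqM) : B := rep y I1.
Definition sq_nu : A -> B := alpha.
Definition sq_aL (b : B) (x : sqL) : sqL := cls OA gzero (fun r => act b (rep x r)).
Definition sq_aM (b : B) (y : sqM) : sqM :=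
  cls OB gzero (fun r => gadd (gadd b (rep y r)) (gopp b)).
Definition sq_aN : B -> A -> A := act.
Definition sq_h (y : sqM) (a : A) : sqL :=
  cls OA gzero (fun r => gadd (act (rep y r) a) (gopp a)).
End Data.

(* Main.v *)
Require Import Defs.
From Stdlib Require Import Reals Lra Classical ClassicalEpsilon FunctionalExtensionality PropExtensionality ProofIrrelevance.
Open Scope R_scope.

Lemma fpext {X : Type} (P Q : X -> Prop) : (forall x, P x <-> Q x) -> P = Q.
Proof. intros H. apply functional_extensionality; intros x; apply propositional_extensionality; auto. Qed.

Lemma open_R_True : open_R (fun _ => True).
Proof. intros x _. exists 1. split; [lra|auto]. Qed.

Lemma open_I_top : is_topology open_I.
Proof.
  split; [|split].
  - exists (fun _ => True). split; [apply open_R_True| tauto].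
  - intros F HF.
    exists (fun x => exists U W, F U /\ open_R W /\ (forall r:I, U r <-> W (proj1_sig r)) /\ W x).
    split.
    + intros x [U [W [HU [HW [HUW Wx]]]]].
      destruct (HW x Wx) as [e [He HWe]]. exists e. split; auto.
      intros y Hy. exists U, W. auto.
    + intros r. split.
      * intros [U [HU Ur]]. destruct (HF U HU) as [W [HW HUW]]. exists U, W.
        split; [auto|split; [auto|split; [auto|apply HUW; auto]]].
      * intros [U [W [HU [HW [HUW Wx]]]]]. exists U. split; auto. apply HUW; auto.
  - intros U V [W1 [H1 E1]] [W2 [H2 E2]].
    exists (fun x => W1 x /\ W2 x). split.
    + intros x [a b]. destruct (H1 x a) as [e1 [He1 P1]]. destruct (H2 x b) as [e2 [He2 P2]].
      exists (Rmin e1 e2). split. apply Rmin_pos; auto. intros y Hy. split.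
      * apply P1. eapply Rlt_le_trans; eauto. apply Rmin_l.
      * apply P2. eapply Rlt_le_trans; eauto. apply Rmin_r.
    + intros r. rewrite E1, E2. tauto.
Qed.

Lemma prod_top {X Y : Type} (OX : (X->Prop)->Prop) (OY : (Y->Prop)->Prop) :
  is_topology OX -> is_topology OY -> is_topology (open_prod OX OY).
Proof.
  intros [TX [_ IX]] [TY [_ IY]]. split; [|split].
  - intros p _. exists (fun _ => True), (fun _ => True). repeat split; auto.
  - intros F HF p [U [HU Up]]. destruct (HF U HU p Up) as [U1 [V1 [? [? [? [? Hb]]]]]].
    exists U1, V1. repeat split; auto. intros q0 a b. exists U. split; auto.
  - intros U V HU HV p [Up Vp].
    destruct (HU p Up) as [U1 [V1 [? [? [? [? Hb1]]]]]].
    destruct (HV p Vp) as [U2 [V2 [? [? [? [? Hb2]]]]]].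
    exists (fun x => U1 x /\ U2 x), (fun y => V1 y /\ V2 y).
    split; [apply IX; auto|]. split; [apply IY; auto|].
    split; [split; auto|]. split; [split; auto|].
    intros q0 [] []. split; [apply Hb1|apply Hb2]; auto.
Qed.

Lemma II_top : is_topology (open_prod open_I open_I).
Proof. apply prod_top; apply open_I_top. Qed.

Lemma cont_id {X : Type} (OX : (X->Prop)->Prop) : continuous OX OX (fun x => x).
Proof. intros V HV; exact HV. Qed.

Lemma cont_const {X Y : Type} (OX : (X->Prop)->Prop) (OY : (Y->Prop)->Prop) (c : Y) :
  is_topology OX -> continuous OX OY (fun _ : X => c).
Proof.
  intros [T [U _]] V _. destruct (classic (V c)) as [H|H].
  - replace (fun _ : X => V c) with (fun _:X => True); auto. apply fpext; tauto.
  - replace (fun _ : X => V c) with (fun x : X => exists U0, (fun _ => False) U0 /\ U0 x).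
    + apply U. intros _ [].
    + apply fpext; intros x; split; [intros [? [[] _]] | tauto].
Qed.

Lemma cmap {W X Y : Type} (OW : (W->Prop)->Prop) (OX : (X->Prop)->Prop) (OY : (Y->Prop)->Prop)
  (f : X -> Y) (a : W -> X) :
  continuous OX OY f -> continuous OW OX a -> continuous OW OY (fun w => f (a w)).
Proof. intros Hf Ha V HV. apply (Ha _ (Hf V HV)). Qed.

Lemma cmap2 {W X Y Z : Type} (OW : (W->Prop)->Prop) (OX : (X->Prop)->Prop) (OY : (Y->Prop)->Prop)
  (OZ : (Z->Prop)->Prop) (F : X -> Y -> Z) (f : W -> X) (g : W -> Y) :
  is_topology OW -> continuous (open_prod OX OY) OZ (fun p => F (fst p) (snd p)) ->
  continuous OW OX f -> continuous OW OY g -> continuous OW OZ (fun w => F (f w) (g w)).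
Proof.
  intros [_ [UW IW]] HF Hf Hg V HV.
  specialize (HF V HV). cbv beta in HF.
  set (Fam := fun S : W -> Prop => exists U U', OX U /\ OY U' /\
     (forall q, U (fst q) -> U' (snd q) -> V (F (fst q) (snd q))) /\ S = (fun w => U (f w) /\ U' (g w))).
  replace (fun w => V (F (f w) (g w))) with (fun w => exists S, Fam S /\ S w).
  - apply UW. intros S [U [U' [HU [HU' [_ ->]]]]]. apply IW; [apply Hf|apply Hg]; auto.
  - apply fpext; intro w; split.
    + intros [S [[U [U' [_ [_ [Hb ->]]]]] [a b]]]. apply (Hb (f w, g w)); auto.
    + intros Hw. destruct (HF (f w, g w) Hw) as [U [U' [HU [HU' [a [b Hb]]]]]].
      exists (fun w => U (f w) /\ U' (g w)). split; [exists U, U'; auto | auto].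
Qed.

Lemma cont_fst {X Y : Type} (OX : (X->Prop)->Prop) (OY : (Y->Prop)->Prop) :
  is_topology OY -> continuous (open_prod OX OY) OX (@fst X Y).
Proof. intros [TY _] V HV p Vp. exists V, (fun _ => True). repeat split; auto. Qed.

Lemma cont_snd {X Y : Type} (OX : (X->Prop)->Prop) (OY : (Y->Prop)->Prop) :
  is_topology OX -> continuous (open_prod OX OY) OY (@snd X Y).
Proof. intros [TX _] V HV p Vp. exists (fun _ => True), V. repeat split; auto. Qed.

Lemma I_eq (x y : I) : proj1_sig x = proj1_sig y -> x = y.
Proof. destruct x, y; simpl; intros ->; f_equal; apply proof_irrelevance. Qed.

Definition phi_val (p : I * I) : R :=
  proj1_sig (fst p) + proj1_sig (snd p) - proj1_sig (fst p) * proj1_sig (snd p).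
Lemma phi_prf p : 0 <= phi_val p <= 1.
Proof. destruct p as [[s Hs] [t Ht]]; unfold phi_val; simpl. nra. Qed.
Definition phi (p : I*I) : I := exist _ (phi_val p) (phi_prf p).

Lemma phi_s0 s : phi (s, I0) = s.
Proof. apply I_eq. unfold phi, phi_val; simpl. ring. Qed.
Lemma phi_s1 s : phi (s, I1) = I1.
Proof. apply I_eq. unfold phi, phi_val; simpl. ring. Qed.
Lemma phi_0t t : phi (I0, t) = t.
Proof. apply I_eq. unfold phi, phi_val; simpl. ring. Qed.
Lemma phi_1t t : phi (I1, t) = I1.
Proof. apply I_eq. unfold phi, phi_val; simpl. ring. Qed.

Lemma ball_open_I (a : R) e : open_I (fun r : I => Rabs (proj1_sig r - a) < e).
Proof.
  exists (fun x => Rabs (x - a) < e). split; [|intros; tauto].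
  intros x Hx. exists (e - Rabs (x - a)). split; [lra|]. intros y Hy.
  pose proof (Rabs_triang (y - x) (x - a)) as T.
  replace (y - x + (x - a)) with (y - a) in T by ring. lra.
Qed.

Lemma lip_cont (f : I*I -> I) :
  (forall p q, Rabs (proj1_sig (f p) - proj1_sig (f q)) <=
     Rabs (proj1_sig (fst p) - proj1_sig (fst q)) + Rabs (proj1_sig (snd p) - proj1_sig (snd q))) ->
  continuous (open_prod open_I open_I) open_I f.
Proof.
  intros Hf V [W [HW EV]] p Vp.
  apply EV in Vp. destruct (HW _ Vp) as [e [He HWe]].
  exists (fun r : I => Rabs (proj1_sig r - proj1_sig (fst p)) < e/2),
         (fun r : I => Rabs (proj1_sig r - proj1_sig (snd p)) < e/2).
  split; [apply ball_open_I|]. split; [apply ball_open_I|].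
  split; [unfold Rminus; rewrite Rplus_opp_r, Rabs_R0; lra|].
  split; [unfold Rminus; rewrite Rplus_opp_r, Rabs_R0; lra|].
  intros q a b. apply EV. apply HWe. specialize (Hf q p). lra.
Qed.

Lemma phi_cont : continuous (open_prod open_I open_I) open_I phi.
Proof.
  apply lip_cont. intros [[s Hs] [t Ht]] [[s' Hs'] [t' Ht']]. unfold phi, phi_val; simpl.
  replace (s + t - s * t - (s' + t' - s' * t')) with ((s-s')*(1-t) + (t-t')*(1-s')) by ring.
  eapply Rle_trans; [apply Rabs_triang|]. rewrite !Rabs_mult.
  rewrite (Rabs_pos_eq (1-t)) by lra. rewrite (Rabs_pos_eq (1-s')) by lra.
  pose proof (Rabs_pos (s-s')). pose proof (Rabs_pos (t-t')). nra.
Qed.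

Section Grp.
Variable X : GroupData.
Hypothesis G : is_group X.
Lemma gA (x y z : X) : gadd x (gadd y z) = gadd (gadd x y) z.
Proof. apply G. Qed.
Lemma g0l (x : X) : gadd gzero x = x. Proof. apply G. Qed.
Lemma g0r (x : X) : gadd x gzero = x. Proof. apply G. Qed.
Lemma gNl (x : X) : gadd (gopp x) x = gzero. Proof. apply G. Qed.
Lemma gNr (x : X) : gadd x (gopp x) = gzero. Proof. apply G. Qed.
Lemma gNK (x y : X) : gadd (gadd x (gopp y)) y = x.
Proof. rewrite <- gA, gNl, g0r. reflexivity. Qed.
Lemma gKN (x y : X) : gadd (gadd x y) (gopp y) = x.
Proof. rewrite <- gA, gNr, g0r. reflexivity. Qed.
Lemma gNKl (x y : X) : gadd (gopp x) (gadd x y) = y.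
Proof. rewrite gA, gNl, g0l. reflexivity. Qed.
Lemma gKNl (x y : X) : gadd x (gadd (gopp x) y) = y.
Proof. rewrite gA, gNr, g0l. reflexivity. Qed.
Lemma ginv_uniq (x y : X) : gadd x y = gzero -> y = gopp x.
Proof. intros H. rewrite <- (gNKl x y), H, g0r. reflexivity. Qed.
Lemma gopp0 : gopp (@gzero X) = gzero.
Proof. symmetry. apply ginv_uniq. apply g0l. Qed.
Lemma goppK (x : X) : gopp (gopp x) = x.
Proof. symmetry. apply ginv_uniq. apply gNl. Qed.
Lemma goppD (x y : X) : gopp (gadd x y) = gadd (gopp y) (gopp x).
Proof. symmetry. apply ginv_uniq. rewrite gA, gKN, gNr. reflexivity. Qed.
End Grp.

Definition topgrp (X : GroupData) (OX : (X->Prop)->Prop) : Prop :=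
  is_group X /\ is_topology OX /\ continuous (open_prod OX OX) OX (fun p => gadd (fst p) (snd p)) /\
  continuous OX OX gopp.

Lemma topgrp_grp X OX : topgrp X OX -> is_group X. Proof. intros H; apply H. Qed.
Lemma topgrp_top X OX : topgrp X OX -> is_topology OX. Proof. intros H; apply H. Qed.

Lemma cadd {W : Type} (OW : (W->Prop)->Prop) (X : GroupData) OX (f g : W -> X) :
  topgrp X OX -> is_topology OW -> continuous OW OX f -> continuous OW OX g ->
  continuous OW OX (fun w => gadd (f w) (g w)).
Proof. intros T TW Hf Hg. apply (cmap2 OW OX OX OX); auto. apply T. Qed.

Lemma copp {W : Type} (OW : (W->Prop)->Prop) (X : GroupData) OX (f : W -> X) :
  topgrp X OX -> continuous OW OX f -> continuous OW OX (fun w => gopp (f w)).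
Proof. intros T Hf. apply (cmap OW OX OX); auto. apply T. Qed.

Definition II := open_prod open_I open_I.

Lemma rep_spec {X : Type} {OX : (X -> Prop) -> Prop} {z : X} (x : Pi0 OX z) :
  path0 OX z (rep x) /\ proj1_sig x = homotopic OX (rep x).
Proof. unfold rep. destruct (constructive_indefinite_description _ _) as [g Hg]. simpl. exact Hg. Qed.

Lemma rep_cont {X : Type} {OX : (X -> Prop) -> Prop} {z : X} (x : Pi0 OX z) :
  continuous open_I OX (rep x).
Proof. apply rep_spec. Qed.

Lemma rep_I0 {X : Type} {OX : (X -> Prop) -> Prop} {z : X} (x : Pi0 OX z) : rep x I0 = z.
Proof. apply rep_spec. Qed.

Ltac ttac := first [ apply open_I_top | apply II_top | eapply topgrp_top; eassumption | assumption ].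

Ltac ctac :=
  match goal with
  | |- continuous _ _ (fun _ => ?c) => apply cont_const; ttac
  | |- continuous _ _ (fun w => w) => apply cont_id
  | |- continuous _ _ (fun w => @gadd _ (@?a w) (@?b w)) =>
      eapply cadd; [eassumption | ttac | ctac | ctac]
  | |- continuous _ _ (fun w => @gopp _ (@?a w)) => eapply copp; [eassumption | ctac]
  | |- continuous _ _ (fun w => ?f (@?a w) (@?b w)) =>
      eapply cmap2; [ttac | eassumption | ctac | ctac]
  | |- continuous _ _ (fun w => ?f (@?a w)) =>
      eapply cmap; [first [ eassumption | apply cont_fst; ttac | apply cont_snd; ttac
                          | apply phi_cont | eapply rep_cont; eassumption ] | ctac]
  | |- continuous _ _ ?f => first [ eassumption | apply cont_fst; ttac | apply cont_snd; ttac
                          | apply phi_cont | eapply rep_cont; eassumption ]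
  end.

Ltac ttac ::= first [ apply open_I_top | apply II_top | eapply topgrp_top; eassumption
                    | apply prod_top; ttac | assumption ].

Lemma topgrp_add X OX : topgrp X OX -> continuous (open_prod OX OX) OX (fun p => gadd (fst p) (snd p)).
Proof. intros H; apply H. Qed.
Lemma topgrp_opp X OX : topgrp X OX -> continuous OX OX gopp.
Proof. intros H; apply H. Qed.

Ltac ctac ::=
  match goal with
  | |- continuous _ _ _ => eassumption
  | |- continuous _ _ (fun _ => ?c) => apply cont_const; ttac
  | |- continuous _ _ (fun w => w) => apply cont_id
  | |- continuous _ _ (fun w => @gadd _ (@?a w) (@?b w)) =>
      eapply cadd; [eassumption | ttac | ctac | ctac]
  | |- continuous _ _ (fun w => @gopp _ (@?a w)) => eapply copp; [eassumption | ctac]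
  | |- continuous _ _ (fun w => ?f (@?a w) (@?b w)) =>
      eapply cmap2; [ttac | eassumption | ctac | ctac]
  | |- continuous _ _ (fun w => ?f (@?a w)) =>
      eapply cmap; [first [ eassumption | apply cont_fst; ttac | apply cont_snd; ttac
                          | apply phi_cont | eapply rep_cont; eassumption
                          | eapply topgrp_opp; eassumption ] | ctac]
  | |- continuous _ _ ?f => first [ apply cont_fst; ttac | apply cont_snd; ttac
                          | apply phi_cont | eapply rep_cont; eassumption
                          | eapply topgrp_opp; eassumption | eapply topgrp_add; eassumption ]
  end.

Lemma hom_refl {X : Type} (OX : (X->Prop)->Prop) (g : I -> X) :
  continuous open_I OX g -> homotopic OX g g.
Proof.
  intros Cg. exists (fun p => g (fst p)). split; [ctac|].
  repeat split; intros; reflexivity.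
Qed.

Lemma hom_ends {X : Type} (OX : (X->Prop)->Prop) (g d : I -> X) :
  homotopic OX g d -> d I0 = g I0 /\ d I1 = g I1.
Proof.
  intros [H [C [a [b [c d']]]]]. split.
  - rewrite <- (b I0); apply c.
  - rewrite <- (b I1); apply d'.
Qed.

Lemma hom_trans (X : GroupData) (OX : (X->Prop)->Prop) (g h k : I -> X) : topgrp X OX -> continuous open_I OX h ->
  homotopic OX g h -> homotopic OX h k -> homotopic OX g k.
Proof.
  intros T Ch H1' H2'.
  destruct (hom_ends _ _ _ H1') as [e0 e1].
  destruct H1' as [H1 [C1 [a1 [b1 [c1 d1]]]]]. destruct H2' as [H2 [C2 [a2 [b2 [c2 d2]]]]].
  assert (G := topgrp_grp _ _ T).
  exists (fun p => gadd (gadd (H1 p) (gopp (h (fst p)))) (H2 p)).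
  split; [ctac|].
  split; [intros s; simpl; rewrite a1, a2; apply gNK; auto|].
  split; [intros s; simpl; rewrite b1, b2, gNr, g0l; auto|].
  split; intros t; simpl; [rewrite c1, c2, e0 | rewrite d1, d2, e1]; apply gNK; auto.
Qed.

Lemma hom_sym (X : GroupData) (OX : (X->Prop)->Prop) (g h : I -> X) : topgrp X OX -> continuous open_I OX g -> continuous open_I OX h ->
  homotopic OX g h -> homotopic OX h g.
Proof.
  intros T Cg Ch H1'.
  destruct (hom_ends _ _ _ H1') as [e0 e1].
  destruct H1' as [H [C [a [b [c d]]]]].
  assert (G := topgrp_grp _ _ T).
  exists (fun p => gadd (gadd (g (fst p)) (gopp (H p))) (h (fst p))).
  split; [ctac|].
  split; [intros s; simpl; rewrite a, gNr, g0l; auto|].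
  split; [intros s; simpl; rewrite b; apply gNK; auto|].
  split; intros t; simpl; [rewrite c | rewrite d]; rewrite gNr, g0l; auto.
Qed.

Lemma hom_map {X Y : Type} (OX : (X->Prop)->Prop) (OY : (Y->Prop)->Prop) (f : X -> Y) (g d : I -> X) :
  continuous OX OY f -> homotopic OX g d -> homotopic OY (fun r => f (g r)) (fun r => f (d r)).
Proof.
  intros Cf [H [C [a [b [c d']]]]]. exists (fun p => f (H p)). split; [ctac|].
  repeat split; intros; simpl; [rewrite a|rewrite b|rewrite c|rewrite d']; reflexivity.
Qed.

Lemma hom_map2 {X Y Z : Type} (OX : (X->Prop)->Prop) (OY : (Y->Prop)->Prop) (OZ : (Z->Prop)->Prop)
  (F : X -> Y -> Z) (g d : I -> X) (g' d' : I -> Y) :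
  continuous (open_prod OX OY) OZ (fun p => F (fst p) (snd p)) ->
  homotopic OX g d -> homotopic OY g' d' -> homotopic OZ (fun r => F (g r) (g' r)) (fun r => F (d r) (d' r)).
Proof.
  intros CF [H [C [a [b [c d1]]]]] [H' [C' [a' [b' [c' d1']]]]].
  exists (fun p => F (H p) (H' p)). split.
  - apply (cmap2 _ OX OY); auto. apply II_top.
  - repeat split; intros; simpl; [rewrite a, a'|rewrite b, b'|rewrite c, c'|rewrite d1, d1']; reflexivity.
Qed.

Lemma hom_of_eq {X : Type} (OX : (X->Prop)->Prop) (g d : I -> X) :
  continuous open_I OX g -> (forall r, g r = d r) -> homotopic OX g d.
Proof.
  intros C E. replace d with g by (apply functional_extensionality; auto). apply hom_refl; auto.
Qed.

Lemma proj_cls {X : Type} (OX : (X->Prop)->Prop) (z : X) (g : I -> X) :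
  path0 OX z g -> proj1_sig (cls OX z g) = homotopic OX g.
Proof. intros Hg. unfold cls. destruct excluded_middle_informative; [reflexivity|contradiction]. Qed.

Lemma Pi0_eq {X : Type} (OX : (X->Prop)->Prop) (z : X) (x y : Pi0 OX z) :
  proj1_sig x = proj1_sig y -> x = y.
Proof. destruct x, y; simpl; intros ->; f_equal; apply proof_irrelevance. Qed.

Lemma cls_eq (X : GroupData) (OX : (X->Prop)->Prop) (z : X) (g d : I -> X) : topgrp X OX ->
  path0 OX z g -> path0 OX z d -> homotopic OX g d -> cls OX z g = cls OX z d.
Proof.
  intros T Pg Pd Hgd. apply Pi0_eq. rewrite !proj_cls by auto.
  destruct Pg as [Cg _]. destruct Pd as [Cd _].
  apply fpext; intros k; split; intros Hk.
  - apply (hom_trans _ _ d g k); auto. apply hom_sym; auto.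
  - apply (hom_trans _ _ g d k); auto.
Qed.

Lemma cls_rep {X : Type} (OX : (X->Prop)->Prop) (z : X) (x : Pi0 OX z) : cls OX z (rep x) = x.
Proof.
  apply Pi0_eq. destruct (rep_spec x) as [P E]. rewrite proj_cls by auto. auto.
Qed.

Lemma rep_cls {X : Type} (OX : (X->Prop)->Prop) (z : X) (g : I -> X) :
  path0 OX z g -> homotopic OX (rep (cls OX z g)) g.
Proof.
  intros Pg. destruct (rep_spec (cls OX z g)) as [P E]. rewrite proj_cls in E by auto.
  rewrite <- E. apply hom_refl. apply Pg.
Qed.

Lemma zero_cls {X : Type} (OX : (X->Prop)->Prop) (z : X) : Pi0_zero OX z = cls OX z (fun _ => z).
Proof.
  apply Pi0_eq. rewrite proj_cls; [reflexivity|]. split; [apply const_continuous|reflexivity].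
Qed.

Lemma hom_rep_l (X : GroupData) (OX : (X->Prop)->Prop) (z : X) (g Q : I -> X) : topgrp X OX -> path0 OX z g -> continuous open_I OX Q ->
  homotopic OX g Q -> homotopic OX (fun r => rep (cls OX z g) r) Q.
Proof.
  intros T Pg CQ H. apply (hom_trans _ _ _ g Q); auto; [apply Pg|]. apply rep_cls; auto.
Qed.

Lemma hom_rep_r (X : GroupData) (OX : (X->Prop)->Prop) (z : X) (g Q : I -> X) : topgrp X OX -> path0 OX z g -> continuous open_I OX Q ->
  homotopic OX Q g -> homotopic OX Q (fun r => rep (cls OX z g) r).
Proof.
  intros T Pg CQ H. apply (hom_trans _ _ _ g _); auto; [apply Pg|]. apply hom_sym; auto.
  - apply rep_cont.
  - apply Pg.
  - apply rep_cls; auto.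
Qed.

Lemma rep_ends {X : Type} (OX : (X->Prop)->Prop) (z : X) (g : I -> X) :
  path0 OX z g -> rep (cls OX z g) I1 = g I1.
Proof. intros Pg. symmetry. apply (hom_ends _ _ _ (rep_cls _ _ _ Pg)). Qed.

Ltac gby := eapply topgrp_grp; eassumption.
Ltac zsimp0 := first [ rewrite rep_I0 | rewrite g0l by gby | rewrite g0r by gby
  | rewrite gNr by gby | rewrite gNl by gby | rewrite gopp0 by gby ].
Ltac zsimp := repeat zsimp0; try reflexivity.
Ltac ptac := split; [ctac | cbv beta; zsimp].

Ltac strip P :=
  match P with
  | context C [rep (cls ?O ?z ?g)] =>
      let P' := context C [g] in let P'' := eval cbv beta in P' in strip P''
  | _ => P
  end.

Ltac hstruct :=
  match goal with
  | |- homotopic _ ?P ?P => apply hom_refl; ctac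
  | |- homotopic _ (fun r => rep (cls ?O ?z ?g) r) _ => eapply hom_rep_l; [eassumption | ptac | ctac | hstruct]
  | |- homotopic _ (rep (cls ?O ?z ?g)) _ => eapply hom_rep_l; [eassumption | ptac | ctac | hstruct]
  | |- homotopic _ (fun r => ?F (@?a r) (@?b r)) (fun r => ?F (@?c r) (@?d r)) =>
      eapply (hom_map2 _ _ _ F a c b d); [ctac | hstruct | hstruct]
  | |- homotopic _ (fun r => ?f (@?a r)) (fun r => ?f (@?c r)) =>
      eapply (hom_map _ _ f a c); [ctac | hstruct]
  end.

Ltac hnorm :=
  match goal with
  | |- homotopic ?O ?P ?Q =>
    let P' := strip P in let Q' := strip Q in
    apply (hom_trans _ O P P' Q); [eassumption | ctac | hstruct |
      apply (hom_trans _ O P' Q' Q); [eassumption | ctac | |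
        apply (hom_sym _ O Q Q'); [eassumption | ctac | ctac | hstruct]]]
  end.

Ltac heq := apply hom_of_eq; [ctac | intro; cbv beta].
Ltac ceq := apply cls_eq; [eassumption | ptac | ptac | hnorm].

Section PiGroup.
Variable X : GroupData.
Variable OX : (X -> Prop) -> Prop.
Hypothesis T : topgrp X OX.
Let G := topgrp_grp _ _ T.

Lemma Pi_group : is_group (Pi0Group OX).
Proof.
  split; [|split].
  - intros x y z. simpl. ceq. heq. apply gA; auto.
  - intros x. simpl. rewrite zero_cls. split.
    + transitivity (cls OX gzero (rep x)); [|apply cls_rep]. ceq. heq. apply g0l; auto.
    + transitivity (cls OX gzero (rep x)); [|apply cls_rep]. ceq. heq. apply g0r; auto.
  - intros x. simpl. rewrite zero_cls. split.
    + ceq. heq. apply gNl; auto.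
    + ceq. heq. apply gNr; auto.
Qed.
End PiGroup.

Lemma cont_pair {W X Y : Type} (OW : (W->Prop)->Prop) (OX : (X->Prop)->Prop) (OY : (Y->Prop)->Prop)
  (f : W -> X) (g : W -> Y) :
  is_topology OW -> continuous OW OX f -> continuous OW OY g ->
  continuous OW (open_prod OX OY) (fun w => (f w, g w)).
Proof.
  intros TW Cf Cg. apply (cmap2 OW OX OY (open_prod OX OY) pair); auto.
  intros V HV. replace (fun x : X * Y => V (fst x, snd x)) with V; auto.
  apply fpext; intros [a b]; simpl; tauto.
Qed.

Lemma diag_hom {X : Type} (OX : (X->Prop)->Prop) (F : I -> I -> X) :
  continuous II OX (fun p => F (fst p) (snd p)) -> (forall t, F t I0 = F I0 I0) ->
  homotopic OX (fun s => F s s) (fun s => F I1 s).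
Proof.
  intros CF HF. exists (fun p => F (phi p) (fst p)). split.
  - apply (cmap II II OX (fun q => F (fst q) (snd q)) (fun p => (phi p, fst p))); auto.
    apply cont_pair; [apply II_top| apply phi_cont | apply cont_fst; apply open_I_top].
  - simpl. split; [intros s; rewrite phi_s0; auto|].
    split; [intros s; rewrite phi_s1; auto|].
    split; [intros t; rewrite phi_0t; auto|].
    intros t; rewrite phi_1t; auto.
Qed.

Ltac gby ::= first [assumption | eapply topgrp_grp; eassumption].

Lemma hom_eq_l {X : Type} (OX : (X->Prop)->Prop) (P P2 Q : I -> X) :
  (forall r, P r = P2 r) -> homotopic OX P2 Q -> homotopic OX P Q.
Proof. intros E H. replace P with P2; auto. apply functional_extensionality; auto. Qed.
Lemma hom_eq_r {X : Type} (OX : (X->Prop)->Prop) (P Q2 Q : I -> X) :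
  (forall r, Q r = Q2 r) -> homotopic OX P Q2 -> homotopic OX P Q.
Proof. intros E H. replace Q with Q2; auto. apply functional_extensionality; auto. Qed.

Lemma gidem (X : GroupData) (G : is_group X) (x : X) : gadd x x = x -> x = gzero.
Proof. intros H. rewrite <- (gNKl _ G x x), H, gNl; auto. Qed.

Section CM.
Variables (A B : GroupData) (OA : (A -> Prop) -> Prop) (OB : (B -> Prop) -> Prop)
  (act : B -> A -> A) (alpha : A -> B).
Hypotheses (GA : is_group A) (GB : is_group B)
  (act0 : forall a, act gzero a = a)
  (actM : forall b b' a, act (gadd b b') a = act b (act b' a))
  (actD : forall b a a', act b (gadd a a') = gadd (act b a) (act b a'))
  (ahom : is_hom alpha)
  (aconj : forall b a, alpha (act b a) = gadd (gadd b (alpha a)) (gopp b))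
  (apeif : forall a a', act (alpha a) a' = gadd (gadd a a') (gopp a))
  (TA : topgrp A OA) (TB : topgrp B OB)
  (Calpha : continuous OA OB alpha)
  (Cact : continuous (open_prod OB OA) OA (fun p => act (fst p) (snd p))).

Lemma act_z b : act b gzero = gzero.
Proof.
  apply gidem; auto. rewrite <- actD, g0l; auto.
Qed.
Lemma alpha_z : alpha gzero = gzero.
Proof.
  apply gidem; auto. rewrite <- ahom, g0l; auto.
Qed.
Lemma act_opp b a : act b (gopp a) = gopp (act b a).
Proof. apply ginv_uniq; auto. rewrite <- actD, gNr, act_z; auto. Qed.
Lemma alpha_opp a : alpha (gopp a) = gopp (alpha a).
Proof. apply ginv_uniq; auto. rewrite <- ahom, gNr, alpha_z; auto. Qed.

Ltac zsimp0 ::= first [ rewrite rep_I0 | rewrite g0l by gby | rewrite g0r by gby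
  | rewrite gNr by gby | rewrite gNl by gby | rewrite gopp0 by gby
  | rewrite act_z | rewrite act0 | rewrite alpha_z ].

Ltac gnorm := repeat (first [rewrite goppD by gby | rewrite goppK by gby | rewrite gopp0 by gby]);
  repeat (rewrite gA by gby);
  repeat (first [rewrite gKN by gby | rewrite gNK by gby | rewrite g0l by gby | rewrite g0r by gby
                | rewrite gNl by gby | rewrite gNr by gby]).

Lemma t_lam_hom : is_hom (sq_lam A B OA OB alpha).
Proof. intros x y. unfold sq_lam. simpl. ceq. heq. apply ahom. Qed.

Lemma main_sq : crossed_square (sqL A OA) (sqM B OB) A B
    (sq_lam A B OA OB alpha) (sq_lam' A OA) (sq_mu B OB) (sq_nu A B alpha)
    (sq_aL A B OA act) (sq_aM B OB) (sq_aN A B act) (sq_h A B OA OB act).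
Proof.
  unfold crossed_square. cbv zeta.
  split; [exact t_lam_hom|].
  repeat match goal with |- _ /\ _ => split end.
  all: unfold crossed_module, sq_lam, sq_lam', sq_mu, sq_nu, sq_aL, sq_aM, sq_aN, sq_h, sqL, sqM; simpl.
  - intros x y. simpl. rewrite rep_ends by ptac. reflexivity.
  - intros l. rewrite rep_ends by ptac. reflexivity.
  - intros p l. ceq. heq. apply aconj.
  - intros p l. rewrite rep_ends by ptac. reflexivity.
  - split; [apply Pi_group; auto|]. split; [auto|].
    split; [intros a; transitivity (cls OB gzero (rep a)); [|apply cls_rep]; ceq; heq; rewrite gopp0, g0r, g0l; auto|].
    split; [intros; ceq; heq; gnorm; reflexivity|].
    split; [intros; ceq; heq; gnorm; reflexivity|].
    split; [intros x y; simpl; rewrite rep_ends by ptac; reflexivity|].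
    split; [intros; rewrite rep_ends by ptac; reflexivity|].
    intros a a'. ceq.
    apply hom_sym; [eassumption|ctac|ctac|].
    apply (diag_hom OB (fun u s => gadd (gadd (rep a u) (rep a' s)) (gopp (rep a u)))).
    + ctac.
    + intros t; cbv beta; zsimp.
  - exact (conj GA (conj GB (conj act0 (conj actM (conj actD (conj ahom (conj aconj apeif))))))).
  - split; [apply Pi_group; auto|]. split; [auto|].
    split; [intros a; transitivity (cls OA gzero (rep a)); [|apply cls_rep]; ceq; heq; apply act0|].
    split; [intros; ceq; heq; apply actM|].
    split; [intros; ceq; heq; apply actD|].
    split; [intros x y; simpl; rewrite !rep_ends by ptac; apply ahom|].
    split; [intros; rewrite !rep_ends by ptac; apply aconj|].
    intros a a'. rewrite !rep_ends by ptac. ceq.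
    eapply hom_eq_l; [intro r; rewrite apeif; reflexivity|].
    apply hom_sym; [eassumption|ctac|ctac|].
    apply (diag_hom OA (fun u s => gadd (gadd (rep a u) (rep a' s)) (gopp (rep a u)))).
    + ctac.
    + intros t; cbv beta; zsimp.
  - intros m n. ceq. heq. rewrite ahom, aconj, alpha_opp. gnorm. reflexivity.
  - intros m n. rewrite rep_ends by ptac. reflexivity.
  - intros l n. ceq. heq. rewrite !apeif. gnorm. reflexivity.
  - intros m l. ceq.
    apply (hom_trans _ _ _ (fun s => gadd (act (rep m s) (rep l s)) (gopp (rep l s))) _);
      [eassumption | ctac | | ].
    + apply hom_sym; [eassumption|ctac|ctac|].
      apply (diag_hom OA (fun u v => gadd (act (rep m v) (rep l u)) (gopp (rep l u)))).
      * ctac.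
      * intros t; cbv beta; zsimp.
    + apply (diag_hom OA (fun u v => gadd (act (rep m u) (rep l v)) (gopp (rep l v)))).
      * ctac.
      * intros t; cbv beta; zsimp.
  - intros m m' n. ceq.
    apply (hom_eq_l _ _ (fun s => gadd (gadd (gadd (act (gadd (rep m s) (rep m' s)) n)
                 (gopp (act (rep m s) n))) (act (rep m s) n)) (gopp n)));
      [intro r; cbv beta; rewrite gNK by gby; reflexivity|].
    apply (hom_eq_r _ _ (fun s => gadd (gadd (gadd (act (gadd (rep m I1) (rep m' s)) n)
                 (gopp (act (rep m I1) n))) (act (rep m s) n)) (gopp n)));
      [intro r; cbv beta; rewrite actD, act_opp, <- actM; gnorm; reflexivity|].
    apply (diag_hom OA (fun u s => gadd (gadd (gadd (act (gadd (rep m u) (rep m' s)) n)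
                 (gopp (act (rep m u) n))) (act (rep m s) n)) (gopp n))).
    + ctac.
    + intros t; cbv beta; zsimp.
  - intros m n n'. ceq. heq. rewrite !actD, !apeif. gnorm. reflexivity.
  - intros p m n. ceq. heq. rewrite <- actM, gNK by gby. rewrite actD, act_opp, <- actM. reflexivity.
Qed.
End CM.

Theorem mainTheorem11 (A B : GroupData)
  (OA : (A -> Prop) -> Prop) (OB : (B -> Prop) -> Prop)
  (act : B -> A -> A) (alpha : A -> B) :
  topological_crossed_module A B OA OB act alpha ->
  crossed_square (sqL A OA) (sqM B OB) A B
    (sq_lam A B OA OB alpha) (sq_lam' A OA) (sq_mu B OB) (sq_nu A B alpha)
    (sq_aL A B OA act) (sq_aM B OB) (sq_aN A B act) (sq_h A B OA OB act).
Proof.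
  intros [[GA [GB [a0 [aM [aD [ah [ac ap]]]]]]] [TOA [TOB [ca [oa [cb [ob [cal cact]]]]]]]].
  exact (main_sq A B OA OB act alpha GA GB a0 aM aD ah ac ap
    (conj GA (conj TOA (conj ca oa))) (conj GB (conj TOB (conj cb ob))) cal cact).
Qed.
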